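(* Let $S$ be a real sequence (data sequence), let $Q=\{Q[1],\dots,Q[n]\}$ be a query sequence of length $n$, and let $S[i:j]$ be a subsequence of $S$ with $j-i+1=n$. Let $\epsilon\ge 0$, let $\omega\ge 1$ and $p\ge 1$ be integers with $p\omega\le n$. For $k=1,\dots,p$ define the query windows $\overline{q_k}=\overline{Q}[(k-1)\omega+1 : k\omega]$ (windows of the LD-sequence $\overline{Q}$) and the data windows $s_k=S[i+(k-1)\omega : i+k\omega-1]$, and let $\mathbb{S}_k$ be the set of all LD-windows of $s_k$, i.e. $\mathbb{S}_k=\{\overline{S_{\{i',j'\}}[a_k:b_k]} : S[i':j'] \text{ is a subsequence of } S \text{ containing } s_k=S[a_k:b_k]\}$. Let $T:\mathbb{R}^\omega\to\mathbb{R}^f$ be a lower-dimensional transformation satisfying $D(T(x),T(y))\le D(x,y)$ for all $x,y\in\mathbb{R}^\omega$. If $D(\overline{Q},\overline{S[i:j]})\le\epsilon$, then there exists $k\in\{1,\dots,p\}$ such that $$D\big(T(\overline{q_k}),\,\mathbb{M}(T(\mathbb{S}_k))\big)\le \epsilon/\sqrt{p}.$$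
   Context: $D(X,Y)=\sqrt{\sum_{t}|X[t]-Y[t]|^2}$ is the Euclidean distance between sequences (or vectors) of equal length. $S[a:b]$ denotes the contiguous subsequence $S[a],S[a+1],\dots,S[b]$; a subsequence $S[i':j']$ contains $S[a:b]$ if $i'\le a\le b\le j'$. Trend line: for a sequence $X$ indexed by $k=1,\dots,m$, its trend line is the least-squares line $g(k)=\alpha k+\beta$ with $\alpha=\frac{m\sum_k kX[k]-\sum_k k\sum_k X[k]}{m\sum_k k^2-(\sum_k k)^2}$, $\beta=\frac{\sum_k X[k]}{m}-\alpha\frac{\sum_k k}{m}$. The LD-sequence (linear detrending sequence) of $X$ is $\overline{X}$ with $\overline{X}[k]=X[k]-g(k)$. For a subsequence $S[i':j']$, its trend line $g$ is the least-squares line fitted to the points $(k,S[k])$, $k=i',\dots,j'$ (equivalently, fitted after reindexing; the detrended values are the same), and $\overline{S[i':j']}$ is the corresponding LD-sequence. LD-window: if $S[a:b]$ is contained in $S[i':j']$ and $g$ is the trend line of $S[i':j']$, the LD-window of $S[a:b]$ against $S[i':j']$, denoted $\overline{S_{\{i',j'\}}[a:b]}$, is the window with entries $S[k]-g(k)$ for $k=a,\dots,b$. LD-MBR: for a set $\mathbb{S}$ of LD-windows of a window, $\mathbb{M}(T(\mathbb{S}))$ is the minimum axis-parallel bounding box in $\mathbb{R}^f$ containing all points $T(\overline{s})$, $\overline{s}\in\mathbb{S}$. The distance $D(x,\mathbb{M})$ between a point $x$ and a box $\mathbb{M}$ is $\min_{y\in\mathbb{M}}D(x,y)$. *)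

(* Defs.v *)
(* Real numbers are modelled by an arbitrary real closed
   field R : rcfType (which provides Num.sqrt). Sequences are 0-indexed. *)
From HB Require Import structures.
From mathcomp Require Import all_boot all_order all_algebra.

Import Order.TTheory GRing.Theory Num.Theory.
Local Open Scope ring_scope.

Definition dist {R : rcfType} {m : nat} (x y : 'rV[R]_m) : R :=
  Num.sqrt (\sum_(c < m) (x 0 c - y 0 c) ^+ 2).

(* Trend line of the subsequence X[i0 : j0] (0-indexed, inclusive), fitted
   after reindexing k = 1..m with X'[k] = X[i0 + k - 1], m = j0 - i0 + 1. *)
Definition tl_len (i0 j0 : nat) : nat := (j0 - i0).+1.

Definition tl_alpha {R : rcfType} (X : nat -> R) (i0 j0 : nat) : R :=
  let m := tl_len i0 j0 in
  let sk := \sum_(1 <= k < m.+1) (k%:R : R) in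
  let skk := \sum_(1 <= k < m.+1) (k%:R : R) ^+ 2 in
  let sx := \sum_(1 <= k < m.+1) X (i0 + k - 1)%N in
  let skx := \sum_(1 <= k < m.+1) k%:R * X (i0 + k - 1)%N in
  (m%:R * skx - sk * sx) / (m%:R * skk - sk ^+ 2).

Definition tl_beta {R : rcfType} (X : nat -> R) (i0 j0 : nat) : R :=
  let m := tl_len i0 j0 in
  let sk := \sum_(1 <= k < m.+1) (k%:R : R) in
  let sx := \sum_(1 <= k < m.+1) X (i0 + k - 1)%N in
  sx / m%:R - tl_alpha X i0 j0 * (sk / m%:R).

(* g(t) for the trend line g of X[i0 : j0], evaluated at global index t >= i0
   (local index k = t - i0 + 1). *)
Definition trend {R : rcfType} (X : nat -> R) (i0 j0 t : nat) : R :=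
  tl_alpha X i0 j0 * (t - i0).+1%:R + tl_beta X i0 j0.

Definition ld {R : rcfType} (X : nat -> R) (i0 j0 t : nat) : R :=
  X t - trend X i0 j0 t.

Definition ld_seq {R : rcfType} (X : nat -> R) (i0 n : nat) : 'rV[R]_n :=
  \row_(c < n) ld X i0 (i0 + n - 1)%N (i0 + c)%N.

Definition ld_window {R : rcfType} (X : nat -> R) (i0 j0 a w : nat) : 'rV[R]_w :=
  \row_(c < w) ld X i0 j0 (a + c)%N.

(* The set of all LD-windows of the window X[a : a + w - 1], where X has
   length N (valid indices 0 .. N-1): over all subsequences X[i0 : j0]
   containing it. *)
Definition ld_windows {R : rcfType} (X : nat -> R) (N a w : nat) (v : 'rV[R]_w) : Prop :=
  exists i0 j0 : nat,
    [/\ (i0 <= a)%N, (a + w - 1 <= j0)%N, (j0 < N)%N &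
        v = ld_window X i0 j0 a w].

(* Minimum axis-parallel bounding box of a set P of points of R^f:
   a point lies in it iff it lies in every axis-parallel box containing P. *)
Definition mbr {R : rcfType} {f : nat} (P : 'rV[R]_f -> Prop) (y : 'rV[R]_f) : Prop :=
  forall lo hi : 'rV[R]_f,
    (forall z, P z -> forall c, lo 0 c <= z 0 c <= hi 0 c) ->
    forall c, lo 0 c <= y 0 c <= hi 0 c.

Definition is_box_dist {R : rcfType} {f : nat} (x : 'rV[R]_f)
    (M : 'rV[R]_f -> Prop) (d : R) : Prop :=
  (exists2 y, M y & dist x y = d) /\ (forall y, M y -> d <= dist x y).

Definition ld_seq_window {R : rcfType} (X : nat -> R) (i0 n a w : nat) : 'rV[R]_w :=
  \row_(c < w) ld X i0 (i0 + n - 1)%N (i0 + (a + c))%N.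

(* Main.v *)
Require Import Defs.
From HB Require Import structures.
From mathcomp Require Import all_boot all_order all_algebra.
From Stdlib Require Import Lia.
Import Order.TTheory GRing.Theory Num.Theory.
Local Open Scope ring_scope.

Section Aux.
Context {R : rcfType}.

Definition mn (a b : R) := if a <= b then a else b.
Definition mx (a b : R) := if a <= b then b else a.

Lemma mn_le_l a b : mn a b <= a.
Proof. by rewrite /mn; case: ifP => // /negbT; rewrite -ltNge => /ltW. Qed.
Lemma mn_le_r a b : mn a b <= b.
Proof. rewrite /mn; case: ifP => //. Qed.
Lemma mn_ge l a b : l <= a -> l <= b -> l <= mn a b.
Proof. rewrite /mn; case: ifP => //. Qed.
Lemma mx_ge_l a b : a <= mx a b.
Proof. rewrite /mx; case: ifP => //. Qed.
Lemma mx_ge_r a b : b <= mx a b.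
Proof. by rewrite /mx; case: ifP => // /negbT; rewrite -ltNge => /ltW. Qed.
Lemma mx_le l a b : a <= l -> b <= l -> mx a b <= l.
Proof. rewrite /mx; case: ifP => //. Qed.

Section Fold.
Context {T : eqType} (F : T -> R) (x0 : R).
Definition fmin (s : seq T) := foldr (fun j acc => mn (F j) acc) x0 s.
Definition fmax (s : seq T) := foldr (fun j acc => mx (F j) acc) x0 s.

Lemma fmin_mem s j : j \in s -> fmin s <= F j.
Proof.
elim: s => //= a s IH; rewrite inE => /orP[/eqP->|/IH H].
  exact: mn_le_l.
exact: le_trans (mn_le_r _ _) H.
Qed.
Lemma fmin_idx s : fmin s <= x0.
Proof. elim: s => //= a s IH; exact: le_trans (mn_le_r _ _) IH. Qed.
Lemma fmin_lb l s : l <= x0 -> (forall j, j \in s -> l <= F j) -> l <= fmin s.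
Proof.
move=> H0; elim: s => //= a s IH H; apply: mn_ge.
  by apply: H; rewrite inE eqxx.
by apply: IH => j js; apply: H; rewrite inE js orbT.
Qed.
Lemma fmax_mem s j : j \in s -> F j <= fmax s.
Proof.
elim: s => //= a s IH; rewrite inE => /orP[/eqP->|/IH H].
  exact: mx_ge_l.
exact: le_trans H (mx_ge_r _ _).
Qed.
Lemma fmax_idx s : x0 <= fmax s.
Proof. elim: s => //= a s IH; exact: le_trans IH (mx_ge_r _ _). Qed.
Lemma fmax_ub l s : x0 <= l -> (forall j, j \in s -> F j <= l) -> fmax s <= l.
Proof.
move=> H0; elim: s => //= a s IH H; apply: mx_le.
  by apply: H; rewrite inE eqxx.
by apply: IH => j js; apply: H; rewrite inE js orbT.
Qed.
End Fold.

Definition clamp (x lo hi : R) := if x < lo then lo else if hi < x then hi else x.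

Lemma clamp_in x lo hi : lo <= hi -> lo <= clamp x lo hi <= hi.
Proof.
move=> H; rewrite /clamp; case: (ltP x lo) => Hl; first by rewrite lexx H.
case: (ltP hi x) => Hh; first by rewrite H lexx.
by rewrite Hl Hh.
Qed.

Lemma clamp_best x lo hi y : lo <= y <= hi ->
  (x - clamp x lo hi) ^+ 2 <= (x - y) ^+ 2.
Proof.
case/andP=> Hl Hh.
rewrite -(real_normK (num_real (x - clamp _ _ _))) -(real_normK (num_real (x - y))).
rewrite ler_sqr ?nnegrE ?normr_ge0 //.
rewrite /clamp; case: (ltP x lo) => Hx.
  have H1 : 0 <= lo - x by rewrite subr_ge0; apply: ltW.
  rewrite (distrC x lo) (ger0_norm H1).
  rewrite distrC; apply: le_trans _ (ler_norm _).
  by rewrite lerD2r.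
case: (ltP hi x) => Hx2; last by rewrite subrr normr0 normr_ge0.
have H1 : 0 <= x - hi by rewrite subr_ge0; apply: ltW.
rewrite (ger0_norm H1).
apply: le_trans _ (ler_norm _).
by rewrite lerD2l lerN2.
Qed.

Lemma sum_blocks (F : nat -> R) p w :
  \sum_(c < p * w) F c = \sum_(k < p) \sum_(c < w) F (k * w + c)%N.
Proof.
elim: p => [|p IH]; first by rewrite mul0n !big_ord0.
by rewrite mulSnr big_split_ord /= IH big_ord_recr.
Qed.

Lemma sum_prefix (F : nat -> R) m n : (m <= n)%N -> (forall c, 0 <= F c) ->
  \sum_(c < m) F c <= \sum_(c < n) F c.
Proof.
move=> Hmn H0; rewrite -(subnKC Hmn) big_split_ord /= lerDl.
by apply: sumr_ge0 => c _.
Qed.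


End Aux.
Arguments fmin_mem {R T F x0 s j}.
Arguments fmax_mem {R T F x0 s j}.

Ltac nlia := repeat match goal with H: is_true (leq _ _) |- _ => move/leP: H => H end;
  try apply/leP; unfold addn, subn, muln, addn_rec, subn_rec, muln_rec in *; lia.

Theorem theorem1 (R : rcfType) (N : nat) (S : nat -> R) (n : nat) (Q : nat -> R)
    (i : nat) (eps : R) (w p f : nat) (T : 'rV[R]_w -> 'rV[R]_f) :
  (i + n <= N)%N ->
  0 <= eps ->
  (1 <= w)%N -> (1 <= p)%N -> (p * w <= n)%N ->
  (forall x y : 'rV[R]_w, dist (T x) (T y) <= dist x y) ->
  dist (ld_seq Q 0 n) (ld_seq S i n) <= eps ->
  exists k : 'I_p, exists d : R,
    is_box_dist
      (T (ld_seq_window Q 0 n (k * w)%N w))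
      (mbr (fun z => exists2 s, ld_windows S N (i + k * w)%N w s & z = T s))
      d
    /\ d <= eps / Num.sqrt (p%:R).
Proof.
move=> HN He Hw Hp Hpw HT Hd.
set F := fun j : nat => (ld Q 0 (0 + n - 1) (0 + j) - ld S i (i + n - 1) (i + j)) ^+ 2.
have F0 : forall j, 0 <= F j by move=> j; rewrite /F sqr_ge0.
have Hsum : \sum_(c < n) F c <= eps ^+ 2.
  have X0 : 0 <= \sum_(c < n) F c by apply: sumr_ge0.
  rewrite -(sqr_sqrtr X0) ler_sqr ?nnegrE ?sqrtr_ge0 //.
  apply: le_trans Hd; rewrite /dist le_eqVlt; apply/orP; left; apply/eqP.
  by congr Num.sqrt; apply: eq_bigr => c _; rewrite !mxE.
have Hblk : \sum_(k < p) \sum_(c < w) F (k * w + c)%N <= eps ^+ 2.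
  by rewrite -sum_blocks; apply: le_trans Hsum; apply: sum_prefix.
have pR0 : (p%:R : R) != 0 by rewrite pnatr_eq0 -lt0n.
have [k Hk] : exists k : 'I_p, \sum_(c < w) F (k * w + c)%N <= eps ^+ 2 / p%:R.
  case: (boolP [exists k : 'I_p, \sum_(c < w) F (k * w + c)%N <= eps ^+ 2 / p%:R]).
    by move/existsP.
  move/existsPn => H; exfalso.
  have : \sum_(k < p) eps ^+ 2 / p%:R < \sum_(k < p) \sum_(c < w) F (k * w + c)%N.
    apply: ltr_sum.
      apply/hasP; exists (Ordinal Hp); first by rewrite mem_index_enum.
      by [].
    by move=> j _; rewrite ltNge; apply: H.
  rewrite sumr_const card_ord -[_ *+ p]mulr_natr mulfVK // => Hlt.
  by move: (lt_le_trans Hlt Hblk); rewrite ltxx.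
have Hkw : (k * w + w <= n)%N.
  apply: leq_trans Hpw; rewrite -mulSnr; apply: leq_mul => //; exact: ltn_ord.
set a := (i + k * w)%N.
set s := ld_window S i (i + n - 1) a w.
set q := ld_seq_window Q 0 n (k * w)%N w.
have Hqs : dist q s <= eps / Num.sqrt p%:R.
  have X0 : 0 <= \sum_(c < w) F (k * w + c)%N by apply: sumr_ge0.
  have E : dist q s = Num.sqrt (\sum_(c < w) F (k * w + c)%N).
    rewrite /dist; congr Num.sqrt; apply: eq_bigr => c _.
    by rewrite !mxE /F /a (addnA i).
  rewrite E -ler_sqr ?nnegrE ?sqrtr_ge0 ?divr_ge0 ?sqrtr_ge0 //.
  by rewrite sqr_sqrtr // expr_div_n sqr_sqrtr // ler0n.
set P := (fun z => exists2 s0, ld_windows S N a w s0 & z = T s0).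
have Hs : ld_windows S N a w s.
  have Ha1 : (i <= a)%N by rewrite /a leq_addr.
  have Ha2 : (a + w - 1 <= i + n - 1)%N.
    rewrite /a -addnA leq_sub2r // leq_add2l //.
  have Ha3 : (i + n - 1 < N)%N.
    apply: leq_trans HN; rewrite subn1 prednK // addn_gt0; apply/orP; right; apply: leq_trans _ Hkw; by rewrite addn_gt0 Hw orbT.
  rewrite /ld_windows; exists i, (i + n - 1)%N; by split.
have HP0 : P (T s) by exists s.
pose V (ij : 'I_N * 'I_N) := T (ld_window S ij.1 ij.2 a w).
pose ls := filter (fun ij : 'I_N * 'I_N => (ij.1 <= a)%N && (a + w - 1 <= ij.2)%N) (enum {: 'I_N * 'I_N}).
have HPV : forall z, P z -> exists2 ij, ij \in ls & z = V ij.
  move=> z [s0 [i0 [j0 [H1 H2 H3 ->]]]] ->.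
  have Hi0 : (i0 < N)%N.
    apply: leq_ltn_trans H3; apply: leq_trans H1 _; apply: leq_trans _ H2; by rewrite -addnBA // leq_addr.
  exists (Ordinal Hi0, Ordinal H3) => //.
  by rewrite mem_filter /= H1 H2 mem_enum.
have HVP : forall ij, ij \in ls -> P (V ij).
  move=> ij; rewrite mem_filter => /andP[/andP[H1 H2] _].
  exists (ld_window S ij.1 ij.2 a w) => //.
  by exists ij.1, ij.2; split.
set z0 := T s.
pose lo := \row_c fmin (fun ij => V ij 0 c) (z0 0 c) ls.
pose hi := \row_c fmax (fun ij => V ij 0 c) (z0 0 c) ls.
have Hbox : forall z, P z -> forall c, lo 0 c <= z 0 c <= hi 0 c.
  move=> z /HPV [ij Hij ->] c; rewrite !mxE.
  by rewrite (fmin_mem Hij) (fmax_mem Hij).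
have Hlohi : forall c, lo 0 c <= hi 0 c.
  by move=> c; case/andP: (Hbox _ HP0 c); apply: le_trans.
set x := T q.
pose y := \row_c clamp (x 0 c) (lo 0 c) (hi 0 c).
have Hy : mbr P y.
  move=> lo' hi' H c.
  have L1 : lo' 0 c <= lo 0 c.
    rewrite mxE; apply: fmin_lb.
      by case/andP: (H _ HP0 c).
    by move=> j /HVP /H /(_ c) /andP[].
  have L2 : hi 0 c <= hi' 0 c.
    rewrite mxE; apply: fmax_ub.
      by case/andP: (H _ HP0 c).
    by move=> j /HVP /H /(_ c) /andP[].
  rewrite mxE; case/andP: (clamp_in (x 0 c) _ _ (Hlohi c)) => C1 C2.
  by rewrite (le_trans L1 C1) (le_trans C2 L2).
have Hmin : forall y', mbr P y' -> dist x y <= dist x y'.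
  move=> y' Hy'; rewrite /dist; apply: ler_wsqrtr; apply: ler_sum => c _.
  rewrite [y 0 c]mxE; apply: clamp_best; exact: (Hy' lo hi Hbox c).
exists k, (dist x y); split; first split.
- by exists y.
- exact: Hmin.
apply: le_trans (Hmin z0 _) _.
  by move=> lo' hi' H; apply: H.
exact: le_trans (HT q s) Hqs.
Qed.
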